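(* Let $G$ be a finite simple undirected graph with property S. Then $G$ is a $\mathcal{P}$-position of Graph Nimors (i.e. the player not to move has a winning strategy, equivalently its Nim value is $0$) if and only if $G$ has an even number of edges.
   Context: Graph Nimors is a two-player impartial game played on a finite simple undirected graph. A move consists of either deleting one edge, or contracting one edge $uv$: removing the adjacent vertices $u,v$ and inserting a new vertex $w$ adjacent to every vertex (other than $u,v$) that was adjacent to $u$ or to $v$ (so the result is again simple). Players alternate; when no edges remain no move is possible, and the player who made the last move wins (normal play). A position is a $\mathcal{P}$-position if the previous player (the one not about to move) can force a win, and an $\mathcal{N}$-position if the next player to move can force a win. The blocks of a graph are its maximal biconnected subgraphs, where a single edge not on any cycle also counts as a block; the edges of a graph are partitioned among its blocks. A graph $G$ has property S if it contains no edge both of whose endpoints have degree greater than two, and no block of $G$ is a triangle (a 3-cycle). *)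

(* Defs.v *)
From mathcomp Require Import all_boot.
Set Implicit Arguments. Unset Strict Implicit. Unset Printing Implicit Defensive.

Section GraphNimors.
Variable T : finType.

(* A finite simple undirected graph on (a subset of) the finite vertex type T
   is represented by its edge set: a set of 2-element vertex sets.
   Isolated vertices play no role in the game nor in property S. *)
Definition simple_graph (E : {set {set T}}) : Prop :=
  forall e, e \in E -> #|e| = 2.

Definition degree (E : {set {set T}}) (x : T) : nat :=
  #|[set e in E | x \in e]|.

(* Contraction of the edge uv: the merged vertex w is represented by the
   label u (v is removed); every edge f <> uv is mapped by v |-> u. *)
Definition merge (u v : T) (x : T) : T := if x == v then u else x.

Definition contract (E : {set {set T}}) (u v : T) : {set {set T}} :=
  (fun f : {set T} => merge u v @: f) @: (E :\ [set u; v]).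

Inductive move (E : {set {set T}}) : {set {set T}} -> Prop :=
| move_delete e : e \in E -> move E (E :\ e)
| move_contract u v : u != v -> [set u; v] \in E -> move E (contract E u v).

(* Outcome classes under normal play (the game is finite, so these
   inductive predicates are the usual P/N-positions). *)
Inductive Ppos : {set {set T}} -> Prop :=
| Ppos_intro E : (forall E', move E E' -> Npos E') -> Ppos E
with Npos : {set {set T}} -> Prop :=
| Npos_intro E E' : move E E' -> Ppos E' -> Npos E.

(* Blocks: maximal biconnected subgraphs, a subgraph being given by its
   (nonempty) edge set F, with vertex set the vertices covered by F. *)
Definition verts (F : {set {set T}}) : {set T} := \bigcup_(e in F) e.

Definition adjF (F : {set {set T}}) : rel T := fun a b => [set a; b] \in F.

Definition connected_on (F : {set {set T}}) (W : {set T}) : Prop :=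
  forall x y, x \in W -> y \in W -> connect (adjF F) x y.

(* connected and without cut vertex (a single edge K2 counts) *)
Definition biconnected (F : {set {set T}}) : Prop :=
  [/\ F != set0,
      connected_on F (verts F)
    & forall z, z \in verts F ->
        connected_on [set e in F | z \notin e] (verts F :\ z)].

Definition block (E F : {set {set T}}) : Prop :=
  [/\ F \subset E, biconnected F
    & forall F' : {set {set T}}, F \subset F' -> F' \subset E -> biconnected F' -> F' = F].

Definition is_triangle (F : {set {set T}}) : Prop :=
  exists a b c : T, [/\ a != b, b != c, a != c &
    F = [set [set a; b]; [set b; c]; [set a; c]]].

Definition property_S (E : {set {set T}}) : Prop :=
  (forall u v, u != v -> [set u; v] \in E ->
      (degree E u <= 2) || (degree E v <= 2))
  /\ ~ (exists F, block E F /\ is_triangle F).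

End GraphNimors.

(* Main.v *)
Require Import Defs.
From mathcomp Require Import all_boot.
Set Implicit Arguments. Unset Strict Implicit. Unset Printing Implicit Defensive.

Definition c1 {T : finType} (E : {set {set T}}) := forall u v : T, u != v -> [set u; v] \in E ->
      (degree E u <= 2) || (degree E v <= 2).
Definition tf {T : finType} (E : {set {set T}}) := forall a b c : T, a != b -> b != c -> a != c ->
  [set a; b] \in E -> [set b; c] \in E -> [set a; c] \in E -> False.
Definition SS {T : finType} (E : {set {set T}}) := [/\ simple_graph E, c1 E & tf E].

Lemma degree_sub {T : finType} (E F : {set {set T}}) x : F \subset E -> degree F x <= degree E x.
Proof.
move=> sFE; rewrite /degree; apply: subset_leq_card; apply/subsetP=> e.
by rewrite !inE => /andP[/(subsetP sFE) -> ->].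
Qed.

Lemma SS_sub {T : finType} (E F : {set {set T}}) : F \subset E -> SS E -> SS F.
Proof.
move=> sFE [sE cE tE]; split.
- by move=> e /(subsetP sFE) /sE.
- move=> u v uv /(subsetP sFE) /(cE _ _ uv) /orP[h|h]; apply/orP; [left|right];
  exact: leq_trans (degree_sub _ sFE) h.
- move=> a b c ab bc ac h1 h2 h3; apply: (tE a b c ab bc ac);
  exact: (subsetP sFE).
Qed.

Definition sw {T : finType} (u v x : T) := if x == u then v else if x == v then u else x.

Lemma swK {T : finType} (u v : T) : involutive (sw u v).
Proof.
move=> x; rewrite /sw.
case: (eqVneq x u) => [->|xu]; first by rewrite eqxx; case: eqVneq => // ->.
case: (eqVneq x v) => [->|xv]; first by rewrite eqxx.
by rewrite (negPf xu) (negPf xv).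
Qed.

Definition imgE {T : finType} (s : T -> T) (E : {set {set T}}) : {set {set T}} :=
  (fun f : {set T} => s @: f) @: E.

Section Inv.
Variables (T : finType) (s : T -> T) (sK : involutive s).
Let sI : injective s := inv_inj sK.

Lemma card_imgE E : #|imgE s E| = #|E|.
Proof. by rewrite card_imset //; apply: imset_inj. Qed.

Lemma mem_imgE E (A : {set T}) : (s @: A \in imgE s E) = (A \in E).
Proof. by rewrite mem_imset //; apply: imset_inj. Qed.

Lemma img2 a b : s @: [set a; b] = [set s a; s b].
Proof. by rewrite imsetU1 imset_set1. Qed.

Lemma imsK (A : {set T}) : s @: (s @: A) = A.
Proof. by rewrite -imset_comp (eq_imset _ sK) imset_id. Qed.

Lemma degree_img E x : degree (imgE s E) (s x) = degree E x.
Proof.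
rewrite /degree -(card_imgE [set e in E | x \in e]); apply: eq_card => e.
apply/idP/idP.
- rewrite inE => /andP[/imsetP[f fE ->]]; rewrite mem_imset // => xf.
  by apply: imset_f; rewrite inE fE.
- move=> /imsetP[f fE0 ->]; move: fE0; rewrite !inE => /andP[fE xf].
  by rewrite mem_imgE fE mem_imset.
Qed.

Lemma mem2_img E a b : ([set a; b] \in imgE s E) = ([set s a; s b] \in E).
Proof. by rewrite -[RHS]mem_imgE img2 !sK. Qed.

Lemma SS_img E : SS E -> SS (imgE s E).
Proof.
move=> [sE cE tE]; split.
- by move=> e /imsetP[f /sE f2 ->]; rewrite card_imset.
- move=> a b ab; rewrite mem2_img => h.
  have ab' : s a != s b by rewrite (inj_eq sI).
  have da : degree (imgE s E) a = degree E (s a) by rewrite -{1}(sK a) degree_img.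
  have db : degree (imgE s E) b = degree E (s b) by rewrite -{1}(sK b) degree_img.
  by rewrite da db; apply: cE.
- move=> a b c ab bc ac; rewrite !mem2_img => h1 h2 h3.
  by apply: (tE (s a) (s b) (s c)); rewrite ?(inj_eq sI).
Qed.

Lemma imgD1 X e : imgE s (X :\ e) = imgE s X :\ (s @: e).
Proof.
apply/setP=> f; rewrite -(imsK f) mem_imgE !inE mem_imgE.
by rewrite (inj_eq (imset_inj sI)).
Qed.

End Inv.

Lemma contract_sw {T : finType} (E : {set {set T}}) u v : u != v ->
  contract E u v = imgE (sw u v) (contract E v u).
Proof.
move=> uv; rewrite /imgE /contract -imset_comp setUC; apply: eq_imset => f /=.
rewrite -imset_comp; apply: eq_imset => x /=.
rewrite /Defs.merge /sw; case: (eqVneq x u) => [->|xu].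
  by rewrite eqxx (negPf uv) eq_sym (negPf uv).
by rewrite (negPf xu).
Qed.

Lemma notin_merge {T : finType} (u v : T) (f : {set T}) : v \notin f -> Defs.merge u v @: f = f.
Proof.
move=> vf; rewrite -[RHS]imset_id; apply: eq_in_imset => z zf.
rewrite /Defs.merge; case: eqVneq => // zv; by rewrite -zv zf in vf.
Qed.

Lemma edge2 {T : finType} (E : {set {set T}}) e v : simple_graph E -> e \in E -> v \in e ->
  exists2 x, x != v & e = [set v; x].
Proof.
move=> sE eE; have /eqP/cards2P[p [q [pq ->]]] := sE e eE.
rewrite !inE => /orP[/eqP->|/eqP->]; first by exists q; rewrite // eq_sym.
by exists p; rewrite // setUC.
Qed.

Lemma key {T : finType} (E : {set {set T}}) u v : SS E -> u != v -> [set u; v] \in E ->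
  degree E v <= 2 ->
  (SS (contract E u v) /\ #|contract E u v| = #|E|.-1) \/
  exists2 e, e \in contract E u v & (SS (contract E u v :\ e) /\ #|contract E u v :\ e| = #|E|.-2).
Proof.
move=> [sE cE tE] uv uvE dv.
have SSE : SS E by [].
set R := [set e in E | v \in e] :\ [set u; v].
have inR g : (g \in R) = [&& g != [set u; v], g \in E & v \in g] by rewrite !inE.
have cR : #|R| <= 1.
  move: dv; rewrite /degree (cardsD1 [set u; v]) inE uvE !inE eqxx orbT /=.
  by rewrite -/R.
have cE1 : #|E| = (#|E :\ [set u; v]|).+1 by rewrite (cardsD1 [set u; v]) uvE.
move: cR; rewrite leq_eqVlt ltnS leqn0 cards_eq0 => /orP[/cards1P[e2 Re2]|/eqP R0].
- right.
  have : e2 \in R by rewrite Re2 set11.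
  rewrite inR => /and3P[e2uv e2E ve2].
  have [x xv e2x] := edge2 sE e2E ve2.
  have xu : x != u by apply: contraNneq e2uv => xu; rewrite e2x xu setUC.
  have uxE : [set u; x] \notin E.
    apply/negP => h; apply: (tE u v x uv _ _ uvE _ h).
    - by rewrite eq_sym.
    - by rewrite eq_sym.
    - by rewrite -e2x.
  have mx : Defs.merge u v @: e2 = [set u; x].
    by rewrite e2x imsetU1 imset_set1 /Defs.merge eqxx (negPf xv).
  have uxC : [set u; x] \in contract E u v.
    by rewrite -mx; apply: imset_f; rewrite !inE e2uv e2E.
  exists [set u; x]; first exact: uxC.
  have -> : contract E u v :\ [set u; x] = E :\ [set u; v] :\ e2.
    apply/setP=> g; rewrite !in_setD1; apply/idP/idP.
    + move=> /andP[gux /imsetP[h hin gh]]; subst g; move: hin; rewrite in_setD1 => /andP[huv hE].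
      case: (boolP (v \in h)) => vh.
        have : h \in R by rewrite inR huv hE vh.
        by rewrite Re2 inE => /eqP hee2; rewrite hee2 mx eqxx in gux.
      rewrite notin_merge // hE huv !andbT.
      by apply: contraNneq vh => ->.
    + move=> /and3P[ge2 guv gE].
      have vg : v \notin g.
        apply/negP => vg; have : g \in R by rewrite inR guv gE vg.
        by rewrite Re2 inE (negPf ge2).
      apply/andP; split.
        by apply: contraNneq uxE => <-.
      have -> : g = Defs.merge u v @: g by rewrite notin_merge.
      by apply: imset_f; rewrite in_setD1 guv gE.
  split; first by apply: SS_sub SSE; apply/subsetP => g; rewrite !inE => /and3P[].
  have e2in : e2 \in E :\ [set u; v] by rewrite !inE e2uv.
  by rewrite cE1 (cardsD1 e2 (E :\ [set u; v])) e2in.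
- left.
  have -> : contract E u v = E :\ [set u; v].
    rewrite /contract -[RHS]imset_id; apply: eq_in_imset => g.
    rewrite !inE => /andP[guv gE]; apply: notin_merge.
    apply/negP => vg; have : g \in R by rewrite inR guv gE vg.
    by rewrite R0 inE.
  split; last by rewrite cE1.
  by apply: SS_sub SSE; apply: subsetDl.
Qed.

Lemma first_hit {T : finType} (r : rel T) (S : {set T}) x y :
  connect r x y -> x \notin S -> y \in S -> exists p t, [/\ p \notin S, t \in S & r p t].
Proof.
move=> /connectP[s]; elim: s x => [|z s IHs] x /=; first by move=> _ -> /negPf ->.
move=> /andP[rxz pz] ly xS yS; case: (boolP (z \in S)) => zS.
  by exists x, z.
exact: IHs pz ly zS yS.
Qed.

Lemma deg3 {T : finType} (E : {set {set T}}) t x y z :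
  x != t -> y != t -> z != t -> x != y -> y != z -> x != z ->
  [set t; x] \in E -> [set t; y] \in E -> [set t; z] \in E -> 3 <= degree E t.
Proof.
move=> xt yt zt xy yz xz h1 h2 h3.
have ne (p q : T) : p != t -> p != q -> [set t; p] != [set t; q].
  move=> pt pq; apply/negP => /eqP e.
  have : p \in [set t; q] by rewrite -e !inE eqxx orbT.
  by rewrite !inE (negPf pt) (negPf pq).
have sub : [set [set t; x]; [set t; y]; [set t; z]] \subset [set e in E | t \in e].
  apply/subsetP => e; rewrite !inE => /orP[/orP[/eqP->|/eqP->]|/eqP->];
  by rewrite ?h1 ?h2 ?h3 !inE eqxx.
apply: leq_trans (subset_leq_card sub).
rewrite setUC cardsU1 cards2 !inE negb_or !ne //; by rewrite eq_sym.
Qed.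

Lemma S_tf {T : finType} (E : {set {set T}}) : simple_graph E -> property_S E -> tf E.
Proof.
move=> sE [cE nB] a b c ab bc ac abE bcE acE; apply: nB.
set F := [set [set a; b]; [set b; c]; [set a; c]].
set S := [set a; b; c].
have FE : F \subset E.
  by apply/subsetP => e; rewrite /F !inE => /orP[/orP[/eqP->|/eqP->]|/eqP->].
have h2 x y : x \in S -> y \in S -> x != y -> [set x; y] \in F.
  rewrite /S /F !inE => /orP[/orP[/eqP->|/eqP->]|/eqP->] /orP[/orP[/eqP->|/eqP->]|/eqP->];
  rewrite ?eqxx // => _; rewrite ?eqxx ?orbT //; by rewrite setUC eqxx ?orbT.
have hE x y : x \in S -> y \in S -> x != y -> [set x; y] \in E.
  by move=> xS yS xy; apply: (subsetP FE); apply: h2.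
have vF x : x \in verts F -> x \in S.
  move=> /bigcupP[e]; rewrite /F /S !inE => /orP[/orP[/eqP->|/eqP->]|/eqP->];
  by rewrite !inE => /orP[/eqP->|/eqP->]; rewrite eqxx ?orbT.
have Sv (F' : {set {set T}}) x : F \subset F' -> x \in S -> x \in verts F'.
  move=> sF; rewrite /S !inE => /orP[/orP[/eqP->|/eqP->]|/eqP->]; apply/bigcupP.
  - by exists [set a; b]; rewrite ?(subsetP sF) // !inE eqxx.
  - by exists [set a; b]; rewrite ?(subsetP sF) // !inE eqxx ?orbT.
  - by exists [set a; c]; rewrite ?(subsetP sF) // !inE eqxx ?orbT.
exists F; split; last by exists a, b, c.
split => //.
- split.
  + by apply/set0Pn; exists [set a; b]; rewrite !inE eqxx.
  + move=> x y /vF xS /vF yS; case: (eqVneq x y) => [->|xy]; first exact: connect0.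
    by apply: connect1; rewrite /adjF h2.
  + move=> z _ x y; rewrite !inE => /andP[xz /vF xS] /andP[yz /vF yS].
    case: (eqVneq x y) => [->|xy]; first exact: connect0.
    apply: connect1; rewrite /adjF inE h2 //= !inE negb_or.
    by rewrite eq_sym xz eq_sym yz.
- move=> F' sF sF'E [_ conn cut].
  apply/eqP; rewrite eqEsubset sF andbT; apply/subsetP => g gF'.
  apply/negPn/negP => gF.
  have /eqP/cards2P[p [q [pq ge]]] := sE g (subsetP sF'E g gF').
  have [w wg wS] : exists2 w, w \in g & w \notin S.
    case: (boolP (p \in S)) => pS; last by exists p; rewrite // ge !inE eqxx.
    case: (boolP (q \in S)) => qS; last by exists q; rewrite // ge !inE eqxx orbT.
    by move: gF; rewrite ge h2.
  have wv : w \in verts F' by apply/bigcupP; exists g.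
  have aS : a \in S by rewrite /S !inE eqxx.
  have [p1 [t [p1S tS rt]]] := first_hit (conn _ _ wv (Sv _ _ sF aS)) wS aS.
  have other t0 : t0 \in S -> exists y z, [/\ y \in S, z \in S & [/\ y != t0, z != t0 & y != z]].
    rewrite /S !inE => /orP[/orP[/eqP->|/eqP->]|/eqP->].
    - by exists b, c; rewrite !inE !eqxx ?orbT; split => //; split; rewrite // eq_sym.
    - by exists a, c; rewrite !inE !eqxx ?orbT; split => //; split; rewrite // eq_sym.
    - by exists a, b; rewrite !inE !eqxx ?orbT; split => //; split; rewrite // eq_sym.
  have deg3S (t0 p0 : T) : t0 \in S -> p0 \notin S -> [set p0; t0] \in E -> 3 <= degree E t0.
    move=> t0S p0S e0; have [y [z [yS zS [yt zt yz]]]] := other t0 t0S.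
    have pn (q0 : T) : q0 \in S -> p0 != q0 by move=> qS; apply: contraNneq p0S => ->.
    apply: (deg3 (x := p0) (y := y) (z := z)) => //; rewrite ?pn //.
    - by rewrite setUC.
    - by apply: hE; rewrite // eq_sym.
    - by apply: hE; rewrite // eq_sym.
  move: rt; rewrite /adjF => rt.
  have d1 := deg3S t p1 tS p1S (subsetP sF'E _ rt).
  have [s [_ [sS _ [st _ _]]]] := other t tS.
  have tv : t \in verts F' by apply/bigcupP; exists [set p1; t]; rewrite // !inE eqxx orbT.
  have wt : w \in verts F' :\ t.
    by rewrite !inE wv andbT; apply: contraNneq wS => ->.
  have st' : s \in verts F' :\ t by rewrite !inE st Sv.
  have [p2 [t2 [p2S t2S rt2]]] := first_hit (cut t tv w s wt st') wS sS.
  move: rt2; rewrite /adjF inE => /andP[rt2 tn].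
  have t2t : t != t2 by apply: contraNneq tn => ->; rewrite !inE eqxx orbT.
  have d2 := deg3S t2 p2 t2S p2S (subsetP sF'E _ rt2).
  by move: (cE t t2 t2t (hE t t2 tS t2S t2t)); rewrite leqNgt d1 leqNgt d2.
Qed.

Lemma key2 {T : finType} (E : {set {set T}}) u v : SS E -> u != v -> [set u; v] \in E ->
  (SS (contract E u v) /\ #|contract E u v| = #|E|.-1) \/
  exists2 e, e \in contract E u v & (SS (contract E u v :\ e) /\ #|contract E u v :\ e| = #|E|.-2).
Proof.
move=> SSE uv uvE; have [_ cE _] := SSE.
have /orP[du|dv] := cE _ _ uv uvE; last exact: key.
have vu : v != u by rewrite eq_sym.
have vuE : [set v; u] \in E by rewrite setUC.
have sK := swK u v.
rewrite (contract_sw E uv).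
case: (key SSE vu vuE du) => [[h1 h2]|[e eC [h1 h2]]].
- by left; rewrite card_imgE // h2; split => //; apply: SS_img.
- right; exists (sw u v @: e); first by rewrite mem_imgE.
  by rewrite -imgD1 // card_imgE //; split => //; apply: SS_img.
Qed.

Lemma move_card {T : finType} (E E' : {set {set T}}) : move E E' -> #|E'| < #|E|.
Proof.
case=> [e eE|u v _ uvE]; first by rewrite (cardsD1 e E) eE.
apply: leq_ltn_trans (leq_imset_card _ _) _.
by rewrite (cardsD1 [set u; v] E) uvE.
Qed.

Lemma notboth {T : finType} n (E : {set {set T}}) : #|E| <= n -> Ppos E -> Npos E -> False.
Proof.
elim: n E => [|n IH] E cE pE nE; case: nE cE pE => {}E E' mv pE' cE pE.
- by have := move_card mv; rewrite ltnNge (leq_trans cE).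
- have h : forall E'', move E E'' -> Npos E'' by case: pE.
  apply: (IH E') => //; last by apply: h.
  by rewrite -ltnS; apply: leq_trans (move_card mv) cE.
Qed.

Lemma mainlem {T : finType} n (E : {set {set T}}) : #|E| <= n -> SS E ->
  if odd #|E| then Npos E else Ppos E.
Proof.
elim: n E => [|n IH] E cE SSE.
  move: cE; rewrite leqn0 => /eqP c0; rewrite c0 /=; constructor => E' mv.
  by have := move_card mv; rewrite c0.
have IH' (E' : {set {set T}}) : #|E'| < #|E| -> SS E' -> if odd #|E'| then Npos E' else Ppos E'.
  by move=> lt; apply: IH; rewrite -ltnS; apply: leq_trans lt cE.
case oE: (odd #|E|).
- have : 0 < #|E| by move: oE; case: #|E|.
  rewrite card_gt0 => /set0Pn[e eE].
  apply: (Npos_intro (move_delete eE)).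
  have cD : #|E| = (#|E :\ e|).+1 by rewrite (cardsD1 e E) eE.
  have := IH' (E :\ e); rewrite cD ltnSn => /(_ isT).
  have -> : odd #|E :\ e| = false by move: oE; rewrite cD /= => /negbTE.
  by apply; apply: SS_sub SSE; apply: subsetDl.
- constructor => E' mv; have cpos := move_card mv.
  case: mv cpos => [e eE|u v uv uvE] cpos.
  + have cD : #|E| = (#|E :\ e|).+1 by rewrite (cardsD1 e E) eE.
    have := IH' (E :\ e) cpos (SS_sub (subsetDl _ _) SSE).
    by move: oE; rewrite cD /= => /negbFE ->.
  + have ev : ~~ odd #|E| by rewrite oE.
    case: (key2 SSE uv uvE) => [[h1 h2]|[e eC [h1 h2]]].
    * have := IH' _ cpos h1; rewrite h2.
      by move: ev cpos; rewrite h2; case: #|E| => //= k; rewrite negbK => ->.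
    * apply: (Npos_intro (move_delete eC)).
      have lt : #|contract E u v :\ e| < #|E|.
        by apply: leq_ltn_trans cpos; apply: subset_leq_card; apply: subsetDl.
      have := IH' _ lt h1; rewrite h2.
      move: ev lt; rewrite h2; case: #|E| => [|[|k]] //= ev' _.
      by rewrite negbK in ev'; rewrite (negbTE ev').
Qed.

Theorem theorem3 (T : finType) (E : {set {set T}}) :
  simple_graph E -> property_S E ->
  (Ppos E <-> ~~ odd #|E|).
Proof.
move=> sE pS.
have SSE : SS E by split => //; [case: pS | apply: S_tf].
have := mainlem (leqnn #|E|) SSE.
case: (odd #|E|) => /= h; split => //.
- by move=> p; case: (notboth (leqnn #|E|) p h).
Qed.
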